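(* Let $K>0$, let $H_1,H_2$ be real Hilbert spaces, let $B=H_1\times H_2$ with the symmetric bilinear form $\lfloor (x_1,x_2),(y_1,y_2)\rfloor=K^2\langle x_1,y_1\rangle_{H_1}-\langle x_2,y_2\rangle_{H_2}$ and $q(b)=\frac12\lfloor b,b\rfloor$. Let $0<K'<K$ and let $f:D\to H_2$ be a $K'$-Lipschitz mapping defined on a nonempty closed set $D\subset H_1$. Then the graph of $f$ is $q$-representable.
   Context: $w(B,B)$ is the coarsest topology on $B$ making all maps $b\mapsto\lfloor b,c\rfloor$ ($c\in B$) continuous (here it coincides with the weak topology of the Hilbert space $H_1\times H_2$). A nonempty $A\subset B$ is $q$-positive if $q(b-c)\ge0$ for all $b,c\in A$. A $q$-positive set $A$ is $q$-representable if there exists a $w(B,B)$-lower semicontinuous proper convex function $\varphi:B\to\mathbb{R}\cup\{+\infty\}$ with $\varphi\ge q$ on $B$ and $\{b:\varphi(b)=q(b)\}=A$. A map $g$ is $L$-Lipschitz if $\|g(x)-g(y)\|_{H_2}\le L\|x-y\|_{H_1}$ on its domain. *)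

(* Defs.v *)
From HB Require Import structures.
From mathcomp Require Import all_boot all_order all_algebra.
From mathcomp Require Import all_classical all_reals ereal.
Set Implicit Arguments. Unset Strict Implicit. Unset Printing Implicit Defensive.
Import Order.TTheory GRing.Theory Num.Theory.
Local Open Scope ring_scope.
Local Open Scope classical_set_scope.

Definition ipnorm (R : realType) (V : lmodType R) (ip : V -> V -> R) (x : V) : R :=
  Num.sqrt (ip x x).

Definition is_hilbert (R : realType) (V : lmodType R) (ip : V -> V -> R) : Prop :=
  [/\ (forall x y, ip x y = ip y x),
      (forall (a : R) x y z, ip (a *: x + y) z = a * ip x z + ip y z),
      (forall x, 0 <= ip x x),
      (forall x, ip x x = 0 -> x = 0) &
      (forall u : nat -> V,
         (forall e : R, 0 < e -> exists N : nat, forall m n : nat,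
             (N <= m)%N -> (N <= n)%N -> ipnorm ip (u m - u n) < e) ->
         exists l : V, forall e : R, 0 < e -> exists N : nat, forall n : nat,
             (N <= n)%N -> ipnorm ip (u n - l) < e)].

Definition hclosed (R : realType) (V : lmodType R) (ip : V -> V -> R) (D : set V) : Prop :=
  forall x, ~ D x -> exists r : R, 0 < r /\ forall y, ipnorm ip (y - x) < r -> ~ D y.

Definition lipschitz_on (R : realType) (V1 V2 : lmodType R)
  (ip1 : V1 -> V1 -> R) (ip2 : V2 -> V2 -> R) (L : R) (D : set V1) (f : V1 -> V2) : Prop :=
  forall x y, D x -> D y -> ipnorm ip2 (f x - f y) <= L * ipnorm ip1 (x - y).

Section B.
Variables (R : realType) (V1 V2 : lmodType R)
  (ip1 : V1 -> V1 -> R) (ip2 : V2 -> V2 -> R) (K : R).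

Definition bform (b c : V1 * V2) : R := K ^+ 2 * ip1 b.1 c.1 - ip2 b.2 c.2.
Definition qform (b : V1 * V2) : R := bform b b / 2.
Definition bsub (b c : V1 * V2) : V1 * V2 := (b.1 - c.1, b.2 - c.2).
Definition bcomb (t : R) (b c : V1 * V2) : V1 * V2 :=
  (t *: b.1 + (1 - t) *: c.1, t *: b.2 + (1 - t) *: c.2).

(* closed for w(B,B): the coarsest topology making every b |-> bform b c continuous *)
Definition wclosed (S : set (V1 * V2)) : Prop :=
  forall b, ~ S b -> exists (cs : seq (V1 * V2)) (e : R), 0 < e /\
    forall b', (forall c, c \in cs -> `|bform (bsub b' b) c| < e) -> ~ S b'.

Definition wlsc (phi : V1 * V2 -> \bar R) : Prop :=
  forall t : R, wclosed [set b | (phi b <= t%:E)%E].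

Definition proper_fun (phi : V1 * V2 -> \bar R) : Prop :=
  (forall b, phi b != -oo%E) /\ (exists b, phi b != +oo%E).

Definition convex_fun (phi : V1 * V2 -> \bar R) : Prop :=
  forall (t : R) b c, 0 < t < 1 ->
    (phi (bcomb t b c) <= t%:E * phi b + (1 - t)%:E * phi c)%E.

Definition q_positive (A : set (V1 * V2)) : Prop :=
  A !=set0 /\ forall b c, A b -> A c -> 0 <= qform (bsub b c).

Definition q_representable (A : set (V1 * V2)) : Prop :=
  q_positive A /\
  exists phi : V1 * V2 -> \bar R,
    [/\ wlsc phi, proper_fun phi, convex_fun phi,
        (forall b, ((qform b)%:E <= phi b)%E) &
        [set b | phi b = (qform b)%:E] = A].
End B.

Definition fgraph_on (R : realType) (V1 V2 : lmodType R) (D : set V1) (f : V1 -> V2)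
  : set (V1 * V2) := [set b | D b.1 /\ b.2 = f b.1].

(* Main.v *)
Require Import Defs.
From mathcomp Require Import all_boot all_order all_algebra.
From mathcomp Require Import all_classical all_reals ereal.
From mathcomp Require Import ring lra.
Import Order.TTheory GRing.Theory Num.Theory.
Local Open Scope ring_scope.
Local Open Scope classical_set_scope.
Section IP.
Variables (R : realType) (V : lmodType R) (ip : V -> V -> R).
Hypothesis ipC : forall x y, ip x y = ip y x.
Hypothesis ipL : forall (a : R) x y z, ip (a *: x + y) z = a * ip x z + ip y z.
Hypothesis ipP : forall x, 0 <= ip x x.

Lemma ip0l z : ip 0 z = 0.
Proof.
have := ipL 1 0 0 z; rewrite scale1r addr0 mul1r.
move=> h; have : ip 0 z + ip 0 z - ip 0 z = ip 0 z - ip 0 z by rewrite -h.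
by rewrite addrK subrr.
Qed.
Lemma ipDl x y z : ip (x + y) z = ip x z + ip y z.
Proof. by have := ipL 1 x y z; rewrite scale1r mul1r. Qed.
Lemma ipZl a x z : ip (a *: x) z = a * ip x z.
Proof. by have := ipL a x 0 z; rewrite addr0 ip0l addr0. Qed.
Lemma ipNl x z : ip (- x) z = - ip x z.
Proof. by rewrite -scaleN1r ipZl mulN1r. Qed.
Lemma ipBl x y z : ip (x - y) z = ip x z - ip y z.
Proof. by rewrite ipDl ipNl. Qed.
Lemma ip0r z : ip z 0 = 0.
Proof. by rewrite ipC ip0l. Qed.
Lemma ipDr x y z : ip z (x + y) = ip z x + ip z y.
Proof. by rewrite ipC ipDl !(ipC z). Qed.
Lemma ipZr a x z : ip z (a *: x) = a * ip z x.
Proof. by rewrite ipC ipZl ipC. Qed.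
Lemma ipNr x z : ip z (- x) = - ip z x.
Proof. by rewrite ipC ipNl ipC. Qed.
Lemma ipBr x y z : ip z (x - y) = ip z x - ip z y.
Proof. by rewrite ipDr ipNr. Qed.

Lemma NormD u v : ip (u + v) (u + v) = ip u u + 2 * ip u v + ip v v.
Proof. rewrite ipDl !ipDr (ipC v u); ring. Qed.
Lemma NormB u v : ip (u - v) (u - v) = ip u u - 2 * ip u v + ip v v.
Proof. rewrite ipBl !ipBr (ipC v u); ring. Qed.
Lemma NormZ a u : ip (a *: u) (a *: u) = a ^+ 2 * ip u u.
Proof. rewrite ipZl ipZr; ring. Qed.

Lemma young u v (l : R) : 0 < l -> 2 * ip u v <= l * ip u u + ip v v / l.
Proof.
move=> l0; have := ipP (l *: u - v); rewrite NormB NormZ ipZl.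
move=> h.
have e : l * ip u u + ip v v / l - 2 * ip u v = (l ^+ 2 * ip u u - 2 * (l * ip u v) + ip v v) / l.
  by field; rewrite gt_eqF.
rewrite -subr_ge0 e; apply: divr_ge0 => //; exact: ltW.
Qed.

Lemma NormD_le u v (l : R) : 0 < l ->
  ip (u + v) (u + v) <= (1 + l) * ip u u + (1 + l^-1) * ip v v.
Proof.
move=> l0; rewrite NormD; have := @young u v l l0.
rewrite [ip v v / l]mulrC => h.
have -> : (1 + l) * ip u u + (1 + l^-1) * ip v v = ip u u + ip v v + (l * ip u u + l^-1 * ip v v) by ring.
lra.
Qed.

Lemma ip_sum (T : Type) (s : seq T) (F : T -> V) z :
  ip (\sum_(t <- s) F t) z = \sum_(t <- s) ip (F t) z.
Proof.
elim: s => [|t s IH]; first by rewrite !big_nil ip0l.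
by rewrite !big_cons ipDl IH.
Qed.
Lemma ip_sumr (T : Type) (s : seq T) (F : T -> V) z :
  ip z (\sum_(t <- s) F t) = \sum_(t <- s) ip z (F t).
Proof.
by rewrite ipC ip_sum; apply: eq_bigr => t _; rewrite ipC.
Qed.

Lemma var_id (s : seq (R * V)) z :
  \sum_(w <- s) w.1 = 1 ->
  let c := \sum_(w <- s) w.1 *: w.2 in
  \sum_(w <- s) w.1 * ip (w.2 - z) (w.2 - z) =
  \sum_(w <- s) w.1 * ip (w.2 - c) (w.2 - c) + ip (c - z) (c - z).
Proof.
move=> s1 c.
have e : forall w : R * V, w.1 * ip (w.2 - z) (w.2 - z) =
   w.1 * ip (w.2 - c) (w.2 - c) + 2 * ip (w.1 *: (w.2 - c)) (c - z)
   + w.1 * ip (c - z) (c - z).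
  move=> w; have -> : w.2 - z = (w.2 - c) + (c - z) by rewrite addrA subrK.
  rewrite NormD ipZl; ring.
rewrite (eq_bigr _ (fun w _ => e w)) !big_split /=.
rewrite -big_distrr /= -ip_sum -big_distrl /= s1 mul1r.
have -> : \sum_(w <- s) w.1 *: (w.2 - c) = 0.
  rewrite (eq_bigr (fun w => w.1 *: w.2 - w.1 *: c)); last by move=> w _; rewrite scalerBr.
  by rewrite sumrB -scaler_suml s1 scale1r subrr.
by rewrite ip0l mulr0 addr0.
Qed.

Lemma var_double (s : seq (R * V)) :
  \sum_(w <- s) w.1 = 1 ->
  let c := \sum_(w <- s) w.1 *: w.2 in
  \sum_(w <- s) \sum_(v <- s) w.1 * v.1 * ip (w.2 - v.2) (w.2 - v.2) =
  2 * \sum_(w <- s) w.1 * ip (w.2 - c) (w.2 - c).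
Proof.
move=> s1 c.
have e : forall w : R * V, \sum_(v <- s) w.1 * v.1 * ip (w.2 - v.2) (w.2 - v.2) =
  w.1 * (\sum_(v <- s) v.1 * ip (v.2 - c) (v.2 - c) + ip (c - w.2) (c - w.2)).
  move=> w; rewrite -(@var_id s w.2 s1) big_distrr /=; apply: eq_bigr => v _.
  have -> : w.2 - v.2 = - (v.2 - w.2) by rewrite opprB.
  rewrite ipNl ipNr opprK; ring.
rewrite (eq_bigr _ (fun w _ => e w)).
rewrite (eq_bigr (fun w => w.1 * (\sum_(v <- s) v.1 * ip (v.2 - c) (v.2 - c)) + w.1 * ip (w.2 - c) (w.2 - c))); last first.
  move=> w _; rewrite mulrDr; congr (_ + _).
  have -> : c - w.2 = - (w.2 - c) by rewrite opprB.
  by rewrite ipNl ipNr opprK.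
rewrite big_split /= -big_distrl /= s1 mul1r; ring.
Qed.

End IP.
Arguments ip0l {R V ip}. Arguments ipDl {R V ip}. Arguments ipZl {R V ip}.
Arguments ipNl {R V ip}. Arguments ipBl {R V ip}. Arguments ip0r {R V ip}.
Arguments ipDr {R V ip}. Arguments ipZr {R V ip}. Arguments ipNr {R V ip}.
Arguments ipBr {R V ip}. Arguments NormD {R V ip}. Arguments NormB {R V ip}.
Arguments NormZ {R V ip}. Arguments young {R V ip}. Arguments NormD_le {R V ip}.
Arguments ip_sum {R V ip}. Arguments ip_sumr {R V ip}. Arguments var_id {R V ip}.
Arguments var_double {R V ip}.
Section KZ.
Variables (R : realType) (V1 V2 : lmodType R) (ip1 : V1 -> V1 -> R) (ip2 : V2 -> V2 -> R).
Hypothesis ip1C : forall x y, ip1 x y = ip1 y x.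
Hypothesis ip1L : forall (a : R) x y z, ip1 (a *: x + y) z = a * ip1 x z + ip1 y z.
Hypothesis ip1P : forall x, 0 <= ip1 x x.
Hypothesis ip2C : forall x y, ip2 x y = ip2 y x.
Hypothesis ip2L : forall (a : R) x y z, ip2 (a *: x + y) z = a * ip2 x z + ip2 y z.
Hypothesis ip2P : forall x, 0 <= ip2 x x.
Variables (D : set V1) (f : V1 -> V2) (k l : R) (x p0 : V1).
Hypothesis hk : 0 <= k.
Hypothesis hkl : k < l.
Hypothesis hlip : forall a b, D a -> D b ->
  ip2 (f a - f b) (f a - f b) <= k * ip1 (a - b) (a - b).
Hypothesis hp0 : D p0.

Definition N1 u := ip1 u u.
Definition N2 u := ip2 u u.
Definition g a y := N2 (f a - y) - l * N1 (a - x).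

Lemma N_2le (V : lmodType R) (ip : V -> V -> R)
  (ipC : forall x y, ip x y = ip y x)
  (ipL : forall (a : R) x y z, ip (a *: x + y) z = a * ip x z + ip y z)
  (ipP : forall x, 0 <= ip x x) u v :
  ip (u + v) (u + v) <= 2 * ip u u + 2 * ip v v.
Proof.
have := NormD_le ipC ipL ipP u v 1 ltr01.
rewrite invr1; lra.
Qed.

Lemma coercive : exists c1 c2 c3, [/\ 0 <= c2, 0 <= c3, c1 < l &
  forall a y, D a -> g a y <= (c1 - l) * N1 (a - x) + c2 * N1 (x - p0) + c3 * N2 (f p0 - y)].
Proof.
have hk' := hk; have hkl' := hkl.
have l0 : 0 < l by apply: le_lt_trans hkl.
set lam := (l - k) / (6 * l).
have lam0 : 0 < lam.
  by apply: divr_gt0; lra.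
have lam1 : lam <= 1.
  rewrite /lam ler_pdivrMr; last lra. lra.
have lamk : 3 * lam * k < l - k.
  rewrite /lam.
  have -> : 3 * ((l - k) / (6 * l)) * k = (l - k) * (k / (2 * l)).
    by field; rewrite gt_eqF.
  have : k / (2 * l) < 1 by rewrite ltr_pdivrMr; lra.
  move=> h; rewrite -[X in _ < X]mulr1; rewrite ltr_pM2l //; lra.
exists ((1 + lam) ^+ 2 * k), ((1 + lam) * (1 + lam^-1) * k), (1 + lam^-1).
have li0 : 0 <= lam^-1 by rewrite invr_ge0 ltW.
split.
- apply: mulr_ge0 => //; apply: mulr_ge0; lra.
- lra.
- have : (1 + lam) ^+ 2 * k <= (1 + 3 * lam) * k.
    apply: ler_wpM2r => //; rewrite expr2; nra.
  lra.
move=> a y Da; rewrite /g /N1 /N2.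
have e1 : f a - y = (f a - f p0) + (f p0 - y) by rewrite addrA subrK.
have e2 : a - p0 = (a - x) + (x - p0) by rewrite addrA subrK.
have h1 := NormD_le ip2C ip2L ip2P (f a - f p0) (f p0 - y) lam lam0.
have h2 := NormD_le ip1C ip1L ip1P (a - x) (x - p0) lam lam0.
have h3 := hlip a p0 Da hp0.
rewrite -e1 in h1; rewrite -e2 in h2.
have h4 : ip2 (f a - f p0) (f a - f p0) <=
   k * ((1 + lam) * ip1 (a - x) (a - x) + (1 + lam^-1) * ip1 (x - p0) (x - p0)).
  apply: (le_trans h3); exact: ler_wpM2l.
have h5 : (1 + lam) * ip2 (f a - f p0) (f a - f p0) <=
   (1 + lam) * (k * ((1 + lam) * ip1 (a - x) (a - x) + (1 + lam^-1) * ip1 (x - p0) (x - p0))).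
  apply: ler_wpM2l => //; lra.
have -> : ((1 + lam) ^+ 2 * k - l) * ip1 (a - x) (a - x) +
   (1 + lam) * (1 + lam^-1) * k * ip1 (x - p0) (x - p0) + (1 + lam^-1) * ip2 (f p0 - y) (f p0 - y)
  = (1 + lam) * (k * ((1 + lam) * ip1 (a - x) (a - x) + (1 + lam^-1) * ip1 (x - p0) (x - p0)))
    + (1 + lam^-1) * ip2 (f p0 - y) (f p0 - y) - l * ip1 (a - x) (a - x) by ring.
lra.
Qed.

Definition active y h e a := D a /\ h - e < g a y.
Definition cloud y h e (s : seq (R * V1)) :=
  [/\ (forall w, w \in s -> 0 <= w.1), \sum_(w <- s) w.1 = 1 &
      (forall w, w \in s -> active y h e w.2)].
Definition mf (s : seq (R * V1)) := \sum_(w <- s) w.1 *: f w.2.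

Lemma g_move a y p s : g a (y + s *: (p - y)) =
  g a y - 2 * s * ip2 (f a - y) (p - y) + s ^+ 2 * N2 (p - y).
Proof.
rewrite /g /N2.
have -> : f a - (y + s *: (p - y)) = (f a - y) - s *: (p - y) by rewrite opprD addrA.
rewrite (NormB ip2C ip2L (f a - y)) (ipZr ip2C ip2L) (NormZ ip2C ip2L); ring.
Qed.

Lemma g_conv a y p s : g a (y + s *: (p - y)) =
  (1 - s) * g a y + s * g a p - s * (1 - s) * N2 (p - y).
Proof.
rewrite g_move.
have -> : g a p = g a y - 2 * ip2 (f a - y) (p - y) + N2 (p - y).
  rewrite /g /N2.
  have -> : f a - p = (f a - y) - (p - y) by rewrite opprB addrA subrK.
  rewrite (NormB ip2C ip2L (f a - y)); ring.
ring.
Qed.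

Lemma sum_ge0 (T : eqType) (s : seq T) (F : T -> R) :
  (forall t, t \in s -> 0 <= F t) -> 0 <= \sum_(t <- s) F t.
Proof.
move=> h; rewrite big_seq; apply: sumr_ge0 => t ts; exact: h.
Qed.

Lemma jensen y (s : seq (R * V1)) :
  (forall w, w \in s -> 0 <= w.1) -> \sum_(w <- s) w.1 = 1 ->
  N2 (mf s - y) <= \sum_(w <- s) w.1 * N2 (f w.2 - y).
Proof.
move=> w0 s1.
set sf := [seq (w.1, f w.2) | w <- s].
have sf1 : \sum_(w <- sf) w.1 = 1 by rewrite big_map.
have := var_id ip2C ip2L _ y sf1.
rewrite /= !big_map /= -/(mf s) /N2 => ->.
rewrite lerDr; apply: sum_ge0 => w ws; apply: mulr_ge0; [exact: w0 | exact: ip2P].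
Qed.

Lemma avg y h e s : cloud y h e s -> h - e <= N2 (mf s - y).
Proof.
case=> w0 s1 act.
have hk' := hk; have hkl' := hkl.
set sf := [seq (w.1, f w.2) | w <- s].
have sf1 : \sum_(w <- sf) w.1 = 1 by rewrite big_map.
have E1 := var_id ip2C ip2L _ y sf1.
have E2 : \sum_(w <- s) \sum_(v <- s) w.1 * v.1 * ip2 (f w.2 - f v.2) (f w.2 - f v.2)
   = 2 * \sum_(w <- s) w.1 * ip2 (f w.2 - mf s) (f w.2 - mf s).
  have := var_double ip2C ip2L _ sf1; rewrite /= /sf !big_map /= -/(mf s) => <-.
  by apply: eq_bigr => w _; rewrite big_map.
have E3 := var_double ip1C ip1L _ s1.
have E4 := var_id ip1C ip1L _ x s1.
rewrite /= !big_map /= -/(mf s) in E1.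
rewrite /= in E3 E4.
set Q := \sum_(w <- s) w.1 *: w.2 in E3 E4.
set P := mf s in E1 E2 *.
have Hdd : \sum_(w <- s) \sum_(v <- s) w.1 * v.1 * ip2 (f w.2 - f v.2) (f w.2 - f v.2)
   <= k * \sum_(w <- s) \sum_(v <- s) w.1 * v.1 * ip1 (w.2 - v.2) (w.2 - v.2).
  rewrite mulr_sumr big_seq [X in _ <= X]big_seq; apply: ler_sum => w ws.
  rewrite mulr_sumr big_seq [X in _ <= X]big_seq; apply: ler_sum => v vs.
  have [Dw _] := act w ws; have [Dv _] := act v vs.
  rewrite mulrCA; apply: ler_wpM2l; first by apply: mulr_ge0; [exact: w0|exact: w0].
  exact: hlip.
have Hh : h - e <= \sum_(w <- s) w.1 * g w.2 y.
  have -> : h - e = \sum_(w <- s) w.1 * (h - e) by rewrite -big_distrl /= s1 mul1r.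
  rewrite big_seq [X in _ <= X]big_seq; apply: ler_sum => w ws.
  apply: ler_wpM2l; first exact: w0.
  by have [_ /ltW] := act w ws.
have Eg : \sum_(w <- s) w.1 * g w.2 y =
   \sum_(w <- s) w.1 * ip2 (f w.2 - y) (f w.2 - y) - l * \sum_(w <- s) w.1 * ip1 (w.2 - x) (w.2 - x).
  rewrite mulr_sumr -sumrB; apply: eq_bigr => w _; rewrite /g /N1 /N2; ring.
have VQ0 : 0 <= \sum_(w <- s) w.1 * ip1 (w.2 - Q) (w.2 - Q).
  apply: sum_ge0 => w ws; apply: mulr_ge0; [exact: w0|exact: ip1P].
have Vf0 : 0 <= \sum_(w <- s) w.1 * ip2 (f w.2 - P) (f w.2 - P).
  apply: sum_ge0 => w ws; apply: mulr_ge0; [exact: w0|exact: ip2P].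
have NQ0 := ip1P (Q - x).
rewrite /N2.
have kVQ : k * \sum_(w <- s) w.1 * ip1 (w.2 - Q) (w.2 - Q) <=
     l * \sum_(w <- s) w.1 * ip1 (w.2 - Q) (w.2 - Q).
  by apply: ler_wpM2r => //; apply: ltW.
have lNQ : 0 <= l * ip1 (Q - x) (Q - x) by apply: mulr_ge0 => //; lra.
rewrite E3 in Hdd. rewrite E4 in Eg.
lra.
Qed.

Lemma cloud_mix y h e s a lam : cloud y h e s -> active y h e a -> 0 <= lam <= 1 ->
  cloud y h e ((lam, a) :: [seq ((1 - lam) * w.1, w.2) | w <- s]) /\
  mf ((lam, a) :: [seq ((1 - lam) * w.1, w.2) | w <- s]) = lam *: f a + (1 - lam) *: mf s.
Proof.
case=> w0 s1 act aa /andP[l0 l1]; split; last first.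
  rewrite /mf big_cons big_map /= scaler_sumr; congr (_ + _).
  by apply: eq_bigr => w _; rewrite scalerA.
split.
- move=> w; rewrite inE => /orP[/eqP -> //|/mapP[v vs ->]] /=.
  by apply: mulr_ge0; [lra | exact: w0].
- by rewrite big_cons big_map /= -mulr_sumr s1; ring.
- move=> w; rewrite inE => /orP[/eqP -> //|/mapP[v vs ->]] /=; exact: act.
Qed.
Lemma N2_opp (u v : V2) : N2 (u - v) = N2 (v - u).
Proof. by rewrite /N2 -opprB (ipNl ip2L) (ipNr ip2C ip2L) opprK. Qed.

Lemma kz_main sig0 : 0 < sig0 -> exists y, forall a, D a -> g a y <= sig0.
Proof.
move=> sig00.
have hk' := hk; have hkl' := hkl.
have l0 : 0 < l by apply: le_lt_trans hkl.
have [c1 [c2 [c3 [c20 c30 c1l hco]]]] := coercive.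
set S := [set h | exists y, forall a, D a -> g a y <= h].
set b0 := - l * N1 (p0 - x).
have Slb : lbound S b0.
  move=> h [y hy]; apply: le_trans (hy p0 hp0); rewrite /g.
  have := ip2P (f p0 - y); rewrite /N2 /b0; lra.
have Sne : S !=set0.
  exists (c2 * N1 (x - p0) + c3 * N2 (f p0 - f p0)); exists (f p0) => a Da.
  apply: le_trans (hco a (f p0) Da) _.
  have : 0 <= N1 (a - x) by exact: ip1P.
  move=> h0; have : (c1 - l) * N1 (a - x) <= 0.
    by rewrite mulr_le0_ge0 //; lra.
  lra.
have Sinf : has_inf S by split => //; exists b0.
set m := inf S.
have mle : forall h, S h -> m <= h by move=> h Sh; exact: (ge_inf (proj2 Sinf)).
have [mpos|mneg] := ltP 0 m; last first.
  have [h [y hy] hlt] := inf_adherent sig00 Sinf.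
  exists y => a Da; apply: le_trans (hy a Da) _; rewrite -/m in hlt; lra.
exfalso.
set eps := m / 2.
have eps0 : 0 < eps by rewrite /eps; lra.
have epsm : m = 2 * eps by rewrite /eps; field.
have N1p : 0 <= N1 (x - p0) := ip1P _.
have N1p' : 0 <= N1 (p0 - x) := ip1P _.
set Y0 := m + 1 + l * N1 (p0 - x).
have Y00 : 0 < Y0.
  have : 0 <= l * N1 (p0 - x) by apply: mulr_ge0 => //; lra.
  rewrite /Y0; lra.
set C0 := c2 * N1 (x - p0) + c3 * Y0.
have C00 : 0 <= C0 by rewrite /C0; apply: addr_ge0; apply: mulr_ge0 => //; lra.
set A0 := C0 / (l - c1).
have A00 : 0 <= A0 by apply: divr_ge0 => //; lra.
set R1 := m + 1 + l * A0.
have R10 : 0 < R1.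
  have : 0 <= l * A0 by apply: mulr_ge0 => //; lra.
  rewrite /R1; lra.
set C1 := c2 * N1 (x - p0) + c3 * (2 * Y0 + 2 * R1).
have C10 : 0 <= C1 by rewrite /C1; apply: addr_ge0; apply: mulr_ge0 => //; lra.
set lam := eps / (8 * R1 + eps).
have lam0 : 0 < lam by apply: divr_gt0 => //; lra.
have lamR : 8 * lam * R1 <= eps.
  have e : lam * (8 * R1 + eps) = eps by rewrite /lam mulfVK // gt_eqF //; lra.
  have : 0 <= lam * eps by apply: mulr_ge0; lra.
  move: e; rewrite mulrDr. move=> e h. nra.
have lam1 : lam <= 1 by rewrite /lam ler_pdivrMr; lra.
set tau := lam * eps / 2.
set s := Order.min 1 (Order.min (eps / (2 * R1)) (eps / (2 * C1 + 1))).
have spos : 0 < s.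
  rewrite /s !lt_min ltr01 /=; apply/andP; split; apply: divr_gt0 => //; lra.
have s1 : s <= 1 by rewrite /s ge_min lexx.
have sR : s * R1 <= eps / 2.
  have : s <= eps / (2 * R1) by rewrite /s !ge_min lexx orbT.
  rewrite ler_pdivlMr; last lra. lra.
have sC : s * C1 <= eps / 2.
  have : s <= eps / (2 * C1 + 1) by rewrite /s !ge_min lexx !orbT.
  rewrite ler_pdivlMr; last lra.
  move=> h; have : 0 <= s by lra. nra.
set kap := s * eps / 2.
have kap0 : 0 < kap by rewrite /kap; apply: divr_gt0 => //; apply: mulr_gt0.
have kape : kap <= eps / 2.
  rewrite /kap; have : s * eps <= 1 * eps by apply: ler_wpM2r; lra. lra.
set sig := Order.min 1 (kap / 2).
have sigp : 0 < sig by rewrite /sig lt_min ltr01 /=; apply: divr_gt0.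
have sig1 : sig <= 1 by rewrite /sig ge_min lexx.
have sigk : sig <= kap / 2 by rewrite /sig ge_min lexx orbT.
have [h [y hy] hlt] := inf_adherent sigp Sinf.
rewrite -/m in hlt.
have hm : m <= h by apply: mle; exists y.
have Yb : N2 (f p0 - y) <= Y0.
  have := hy p0 hp0; rewrite /g /Y0; lra.
have gcoer : forall a z, D a -> N2 (f p0 - z) <= 2 * Y0 + 2 * R1 -> g a z <= C1.
  move=> a z Da hz; apply: le_trans (hco a z Da) _.
  have : (c1 - l) * N1 (a - x) <= 0 by rewrite mulr_le0_ge0 //; [lra | exact: ip1P].
  have : c3 * N2 (f p0 - z) <= c3 * (2 * Y0 + 2 * R1) by exact: ler_wpM2l.
  rewrite /C1; lra.
have actb : forall a, active y h eps a -> N2 (f a - y) <= R1.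
  move=> a [Da ha].
  have h1 := hco a y Da.
  have h2 : c3 * N2 (f p0 - y) <= c3 * Y0 by exact: ler_wpM2l.
  have h3 : (l - c1) * N1 (a - x) <= C0 by rewrite /C0; lra.
  have h4 : N1 (a - x) <= A0 by rewrite /A0 ler_pdivlMr; lra.
  have h5 : l * N1 (a - x) <= l * A0 by apply: ler_wpM2l; lra.
  have := hy a Da; rewrite /g /R1; lra.
have [a0 a0act] : exists a, active y h eps a.
  apply: contrapT => hno.
  have : S (h - eps).
    exists y => a Da; rewrite leNgt; apply/negP => hlt'; apply: hno; by exists a; split.
  move=> /mle; lra.
set E := [set r | exists s0, cloud y h eps s0 /\ r = N2 (mf s0 - y)].
have Elb : lbound E eps.
  move=> r [s0 [cs ->]]; have := avg _ _ _ _ cs; lra.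
have Ene : E !=set0.
  exists (N2 (mf [:: (1, a0)] - y)); exists [:: (1, a0)]; split => //; split.
  - by move=> w; rewrite inE => /eqP ->.
  - by rewrite big_cons big_nil addr0.
  - by move=> w; rewrite inE => /eqP ->.
have Einf : has_inf E by split => //; exists eps.
have tau0 : 0 < tau by rewrite /tau; apply: divr_gt0 => //; apply: mulr_gt0.
have [r [s0 [cs0 ->]] rlt] := inf_adherent tau0 Einf.
set p := mf s0 in rlt *.
have pE : eps <= N2 (p - y) by apply: Elb; exists s0.
have pR : N2 (p - y) <= R1.
  case: (cs0) => w0 s01 act0.
  apply: le_trans (jensen y s0 w0 s01) _.
  have -> : R1 = \sum_(w <- s0) w.1 * R1 by rewrite -big_distrl /= s01 mul1r.
  rewrite big_seq [X in _ <= X]big_seq; apply: ler_sum => w ws.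
  apply: ler_wpM2l; [exact: w0 | exact: actb (act0 w ws)].
have key : forall a, active y h eps a -> eps / 2 < ip2 (f a - y) (p - y).
  move=> a aa.
  have lm : 0 <= lam <= 1 by apply/andP; split; lra.
  have [cs' mf'] := cloud_mix _ _ _ _ _ _ cs0 aa lm.
  have infle : inf E <= N2 (mf ((lam, a) :: [seq ((1 - lam) * w.1, w.2) | w <- s0]) - y).
    by apply: (ge_inf (proj2 Einf)); eexists; split; first exact: cs'.
  rewrite mf' -/p in infle.
  have ee : lam *: f a + (1 - lam) *: p - y = (p - y) + lam *: (f a - p).
    rewrite scalerBl scale1r scalerBr.
    rewrite addrC [p - y]addrC -!addrA; congr (_ + _).
    rewrite addrC -!addrA; congr (_ + _). by rewrite addrC.
  rewrite ee /N2 (NormD ip2C ip2L) (ipZr ip2C ip2L) (NormZ ip2C ip2L) in infle.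
  have fpb : N2 (f a - p) <= 4 * R1.
    have -> : f a - p = (f a - y) + (y - p) by rewrite addrA subrK.
    rewrite /N2; apply: le_trans (@N_2le _ _ ip2C ip2L ip2P _ _) _.
    rewrite -!/(N2 _) (N2_opp y p). have := actb a aa. lra.
  set X := ip2 (p - y) (f a - p) in infle.
  have h1 : lam ^+ 2 * N2 (f a - p) <= lam ^+ 2 * (4 * R1) by apply: ler_wpM2l => //; exact: sqr_ge0.
  rewrite -[ip2 (f a - p) (f a - p)]/(N2 (f a - p)) in infle.
  have h2 : - (lam * eps / 2) - lam ^+ 2 * (4 * R1) < 2 * (lam * X).
    have h0 := lt_le_trans rlt (lerD infle (lexx tau)).
    rewrite /tau /N2 in h0 h1. lra.
  have h3 : lam * (- (eps / 2) - 4 * lam * R1) < lam * (2 * X).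
    have -> : lam * (- (eps / 2) - 4 * lam * R1) = - (lam * eps / 2) - lam ^+ 2 * (4 * R1) by rewrite expr2; ring.
    have -> : lam * (2 * X) = 2 * (lam * X) by ring.
    exact: h2.
  rewrite ltr_pM2l // in h3.
  have -> : f a - y = (f a - p) + (p - y) by rewrite addrA subrK.
  rewrite (ipDl ip2L) (ip2C (f a - p)) -/X -/(N2 _).
  lra.
set y' := y + s *: (p - y).
have Sy' : S (h - kap).
  exists y' => a Da.
  have [aa|na] := pselect (active y h eps a).
  - rewrite /y' g_move.
    have k1 := key a aa.
    have k2 : s * (eps / 2) <= s * ip2 (f a - y) (p - y) by apply: ler_wpM2l; lra.
    have k3 : s * (s * N2 (p - y)) <= s * (eps / 2).
      apply: ler_wpM2l; first lra.
      have : s * N2 (p - y) <= s * R1 by apply: ler_wpM2l; lra.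
      lra.
    have := hy a Da; rewrite /kap expr2; lra.
  - have gl : g a y <= h - eps.
      rewrite leNgt; apply/negP => hh; apply: na; by split.
    rewrite /y' g_conv.
    have gp : g a p <= C1.
      apply: gcoer => //.
      have -> : f p0 - p = (f p0 - y) + (y - p) by rewrite addrA subrK.
      rewrite /N2; apply: le_trans (@N_2le _ _ ip2C ip2L ip2P _ _) _.
      rewrite -/(N2 _) -/(N2 _) (N2_opp y p); lra.
    have t1 : (1 - s) * g a y <= (1 - s) * (h - eps) by apply: ler_wpM2l; lra.
    have t2 : s * g a p <= s * C1 by apply: ler_wpM2l; lra.
    have t3 : 0 <= s * (1 - s) * N2 (p - y) by apply: mulr_ge0; [apply: mulr_ge0 |]; lra.
    have t4 : (1 - s) * (h - eps) <= h - eps.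
      have : 0 <= s * (h - eps) by apply: mulr_ge0; lra.
      lra.
    lra.
have := mle _ Sy'; lra.
Qed.

End KZ.
Lemma kz_final (R : realType) (V1 V2 : lmodType R) (ip1 : V1 -> V1 -> R) (ip2 : V2 -> V2 -> R)
  (ip1C : forall x y, ip1 x y = ip1 y x)
  (ip1L : forall (a : R) x y z, ip1 (a *: x + y) z = a * ip1 x z + ip1 y z)
  (ip1P : forall x, 0 <= ip1 x x)
  (ip2C : forall x y, ip2 x y = ip2 y x)
  (ip2L : forall (a : R) x y z, ip2 (a *: x + y) z = a * ip2 x z + ip2 y z)
  (ip2P : forall x, 0 <= ip2 x x)
  (D : set V1) (f : V1 -> V2) (k Kk : R) (x p0 : V1) (rho : R)
  (hk : 0 <= k) (hkK : k < Kk)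
  (hlip : forall a b, D a -> D b -> ip2 (f a - f b) (f a - f b) <= k * ip1 (a - b) (a - b))
  (hp0 : D p0) (hrho : 0 < rho) (hfar : forall a, D a -> rho <= ip1 (a - x) (a - x)) :
  exists y0 (d : R), 0 < d /\
    forall a, D a -> ip2 (f a - y0) (f a - y0) + d <= Kk * ip1 (a - x) (a - x).
Proof.
set l := (k + Kk) / 2.
have hkl : k < l by rewrite /l; lra.
have sg : 0 < (Kk - l) * rho / 2 by apply: divr_gt0 => //; apply: mulr_gt0 => //; rewrite /l; lra.
have [y hy] := @kz_main _ _ _ _ _ ip1C ip1L ip1P ip2C ip2L ip2P _ _ _ _ x _ hk hkl hlip hp0 _ sg.
exists y, ((Kk - l) * rho / 2); split => // a Da.
have := hy a Da; rewrite /g /N1 /N2 => h.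
have := hfar a Da => hr.
have : (Kk - l) * rho <= (Kk - l) * ip1 (a - x) (a - x) by apply: ler_wpM2l => //; rewrite /l; lra.
lra.
Qed.
Theorem mainTheorem18 (R : realType) (V1 V2 : lmodType R)
  (ip1 : V1 -> V1 -> R) (ip2 : V2 -> V2 -> R)
  (H1 : is_hilbert ip1) (H2 : is_hilbert ip2)
  (K K' : R) (hK : 0 < K) (hK' : 0 < K') (hKK : K' < K)
  (D : set V1) (f : V1 -> V2)
  (hD0 : D !=set0) (hDc : hclosed ip1 D) (hf : lipschitz_on ip1 ip2 K' D f) :
  q_representable ip1 ip2 K (fgraph_on D f).
Proof.
case: H1 => ip1C ip1L ip1P ip1D _.
case: H2 => ip2C ip2L ip2P ip2D _.
set A := fgraph_on D f.
have [p0 hp0] := hD0.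
have kK : K' ^+ 2 < K ^+ 2 by rewrite !expr2; nra.
have k0 : 0 <= K' ^+ 2 by exact: sqr_ge0.
have lip2 : forall a b, D a -> D b ->
    ip2 (f a - f b) (f a - f b) <= K' ^+ 2 * ip1 (a - b) (a - b).
  move=> a b Da Db; have h := hf a b Da Db; rewrite /ipnorm in h.
  rewrite -(sqr_sqrtr (ip2P (f a - f b))) -(sqr_sqrtr (ip1P (a - b))) -exprMn.
  rewrite ler_sqr ?nnegrE ?sqrtr_ge0 //; apply: mulr_ge0; [exact: ltW | exact: sqrtr_ge0].
have bformE : forall b c, bform ip1 ip2 K b c = K ^+ 2 * ip1 b.1 c.1 - ip2 b.2 c.2 by [].
have qformE : forall b, qform ip1 ip2 K b = (K ^+ 2 * ip1 b.1 b.1 - ip2 b.2 b.2) / 2 by [].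
have I1 : forall b e (gam : R), bform ip1 ip2 K b e - qform ip1 ip2 K e + gam / 2 - qform ip1 ip2 K b
    = gam / 2 - qform ip1 ip2 K (bsub b e).
  move=> b e gam; rewrite !qformE bformE /bsub /=.
  rewrite (NormB ip1C ip1L) (NormB ip2C ip2L); lra.
have Qpos : forall b c, A b -> A c -> 0 <= qform ip1 ip2 K (bsub b c).
  move=> b c [Db eb] [Dc ec]; rewrite qformE /bsub /= eb ec.
  have := lip2 _ _ Db Dc.
  have : K' ^+ 2 * ip1 (b.1 - c.1) (b.1 - c.1) <= K ^+ 2 * ip1 (b.1 - c.1) (b.1 - c.1).
    by apply: ler_wpM2r => //; exact: ltW.
  move=> *; apply: divr_ge0; lra.
set ell := fun b e (gam : R) => bform ip1 ip2 K b e - qform ip1 ip2 K e + gam / 2.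
set Ms := fun e (gam : R) => forall a, A a -> gam <= bform ip1 ip2 K (bsub a e) (bsub a e).
pose phi := fun b => ereal_sup [set z | exists e gam, Ms e gam /\ z = (ell b e gam)%:E].
have phi_ge : forall b e gam, Ms e gam -> ((ell b e gam)%:E <= phi b)%E.
  move=> b e gam hM; apply: ereal_sup_ubound; by exists e, gam.
have ell_leA : forall a e gam, A a -> Ms e gam -> ell a e gam <= qform ip1 ip2 K a.
  move=> a e gam Aa hM; have h := I1 a e gam; have h2 := hM a Aa.
  have hq : qform ip1 ip2 K (bsub a e) = bform ip1 ip2 K (bsub a e) (bsub a e) / 2 by [].
  rewrite /ell /=; lra.
have phi_leA : forall a, A a -> (phi a <= (qform ip1 ip2 K a)%:E)%E.
  move=> a Aa; apply: ge_ereal_sup => z [e [gam [hM ->]]].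
  by rewrite lee_fin; exact: ell_leA.
have sepA : forall b, A b -> Ms b 0 /\ ell b b 0 = qform ip1 ip2 K b.
  move=> b Ab; split.
    move=> a Aa; have := Qpos _ _ Aa Ab; rewrite /qform; lra.
  have hz : qform ip1 ip2 K (bsub b b) = 0.
    by rewrite qformE /bsub /= !subrr (ip0l ip1L) (ip0l ip2L) mulr0 subrr mul0r.
  have := I1 b b 0; rewrite hz /ell /=; lra.
have sepN : forall b, ~ A b -> exists e gam, Ms e gam /\ qform ip1 ip2 K b < ell b e gam.
  move=> b nAb.
  have [Db1|nDb1] := pselect (D b.1).
  - exists (b.1, f b.1), 0; split.
      move=> a [Da ea]; rewrite bformE /bsub /= ea.
      have := lip2 _ _ Da Db1.
      have : K' ^+ 2 * ip1 (a.1 - b.1) (a.1 - b.1) <= K ^+ 2 * ip1 (a.1 - b.1) (a.1 - b.1).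
        by apply: ler_wpM2r => //; exact: ltW.
      lra.
    have hz : qform ip1 ip2 K (bsub b (b.1, f b.1)) = - ip2 (b.2 - f b.1) (b.2 - f b.1) / 2.
      by rewrite qformE /bsub /= subrr (ip0l ip1L) mulr0 sub0r.
    have : 0 < ip2 (b.2 - f b.1) (b.2 - f b.1).
      rewrite lt_neqAle ip2P andbT eq_sym; apply/negP => /eqP h0.
      apply: nAb; split => //; apply/eqP; rewrite -subr_eq0; apply/eqP; exact: ip2D.
    have := I1 b (b.1, f b.1) 0; rewrite hz /ell /=; lra.
  - have [r [r0 hr]] := hDc _ nDb1.
    have hfar : forall a, D a -> r ^+ 2 <= ip1 (a - b.1) (a - b.1).
      move=> a Da; have : ~ (ipnorm ip1 (a - b.1) < r) by move=> h; exact: (hr a h).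
      move=> /negP; rewrite -leNgt /ipnorm => h.
      rewrite -(sqr_sqrtr (ip1P (a - b.1))) ler_sqr ?nnegrE ?sqrtr_ge0 //; exact: ltW.
    have [y0 [d [d0 hd]]] := @kz_final _ _ _ _ _ ip1C ip1L ip1P ip2C ip2L ip2P _ _ _ _ b.1 _ _ k0 kK lip2 hp0
       (exprn_gt0 2 r0) hfar.
    exists (b.1, y0), d; split.
      move=> a [Da ea]; rewrite bformE /bsub /= ea; have := hd _ Da; lra.
    have hz : qform ip1 ip2 K (bsub b (b.1, y0)) = - ip2 (b.2 - y0) (b.2 - y0) / 2.
      by rewrite qformE /bsub /= subrr (ip0l ip1L) mulr0 sub0r.
    have := ip2P (b.2 - y0).
    have := I1 b (b.1, y0) d; rewrite hz /ell /=; lra.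
have phi_geq : forall b, ((qform ip1 ip2 K b)%:E <= phi b)%E.
  move=> b; have [Ab|nAb] := pselect (A b).
    have [hM he] := sepA b Ab; rewrite -he; exact: phi_ge.
  have [e [gam [hM hlt]]] := sepN b nAb.
  apply: le_trans (phi_ge b e gam hM); rewrite lee_fin; exact: ltW.
have phi_gtN : forall b, ~ A b -> ((qform ip1 ip2 K b)%:E < phi b)%E.
  move=> b nAb; have [e [gam [hM hlt]]] := sepN b nAb.
  by apply: lt_le_trans (phi_ge b e gam hM); rewrite lte_fin.
have phi_eqA : forall a, A a -> phi a = (qform ip1 ip2 K a)%:E.
  by move=> a Aa; apply: le_anti; rewrite phi_leA // phi_geq.
split.
  split; first by exists (p0, f p0).
  exact: Qpos.
exists phi; split.
-
  move=> t b /= hb.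
  have : ((t%:E) < phi b)%E by rewrite ltNge; apply/negP.
  move=> /ereal_sup_gt [z [e [gam [hM ->]]]]; rewrite lte_fin => hz.
  exists [:: e], (ell b e gam - t); split; first by rewrite subr_gt0.
  move=> b' hb' hle.
  have := hb' e (mem_head _ _).
  have ee : ell b' e gam = ell b e gam + bform ip1 ip2 K (bsub b' b) e.
    rewrite /ell !bformE /bsub /= (ipBl ip1L) (ipBl ip2L); ring.
  move=> habs.
  have : ((ell b' e gam)%:E <= t%:E)%E by apply: le_trans hle; exact: phi_ge.
  rewrite lee_fin ee => h2.
  have := ler_normlW (ltW habs). move: habs; rewrite ltr_norml => /andP[h3 h4] _.
  lra.
-
  split.
    move=> b; apply/negP => /eqP hb; have := phi_geq b; rewrite hb.
    by rewrite leNgt ltNyr.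
  exists (p0, f p0); rewrite phi_eqA //.
-
  move=> t b c /andP[t0 t1].
  apply: ge_ereal_sup => z [e [gam [hM ->]]].
  have ee : ell (bcomb t b c) e gam = t * ell b e gam + (1 - t) * ell c e gam.
    rewrite /ell !bformE /bcomb /= !(ipDl ip1L) !(ipZl ip1L) !(ipDl ip2L) !(ipZl ip2L); ring.
  rewrite ee EFinD !EFinM.
  have h1 : (t%:E * (ell b e gam)%:E <= t%:E * phi b)%E.
    by apply: lee_wpmul2l; [rewrite lee_fin; lra | exact: phi_ge].
  have h2 : ((1 - t)%:E * (ell c e gam)%:E <= (1 - t)%:E * phi c)%E.
    by apply: lee_wpmul2l; [rewrite lee_fin; lra | exact: phi_ge].
  exact: leeD h1 h2.
- exact: phi_geq.
- apply/seteqP; split => b /=.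
    move=> hb; apply: contrapT => nAb; have := phi_gtN b nAb; by rewrite hb ltxx.
  by move=> Ab; exact: phi_eqA.
Qed.
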